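(* Let $M(t)\in\mathbb{R}^{n\times n}$ be symmetric and satisfy the Gram flow $\dot M=-(M\Phi+\Phi M)$, where $\Phi(t)$ is symmetric. Suppose that on the time interval considered $M(t)=\sum_e\lambda_e(t)E_e(t)$ is its spectral decomposition, with the eigenvalues $\lambda_e(t)$ remaining distinct (isolated) and the orthogonal spectral projectors $E_e(t)$ differentiable. Then for each $e$, $$\dot E_e=\sum_{f\neq e}\frac{\lambda_e+\lambda_f}{\lambda_f-\lambda_e}\big(E_e\Phi E_f+E_f\Phi E_e\big).$$ *)

(* Defs.v *)
From HB Require Import structures.
From mathcomp Require Import all_boot all_order all_algebra.
From mathcomp Require Import all_classical all_reals all_analysis.
Set Implicit Arguments. Unset Strict Implicit. Unset Printing Implicit Defensive.
Import Order.TTheory GRing.Theory Num.Theory.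
Import numFieldNormedType.Exports.
Local Open Scope ring_scope.

Definition orth_projector (R : realType) (n : nat) (P : 'M[R]_n) : Prop :=
  P^T = P /\ P *m P = P.

Definition spectral_decomposition (R : realType) (n k : nat) (A : 'M[R]_n)
    (lam : 'I_k -> R) (E : 'I_k -> 'M[R]_n) : Prop :=
  [/\ forall e f, e != f -> lam e != lam f,
      forall e, orth_projector (E e) /\ E e != 0,
      forall e f, e != f -> E e *m E f = 0,
      \sum_e E e = 1%:M
    & A = \sum_e lam e *: E e].

(* Main.v *)
Require Import Defs.
From HB Require Import structures.
From mathcomp Require Import all_boot all_order all_algebra.
From mathcomp Require Import all_classical all_reals all_analysis.
Import Order.TTheory GRing.Theory Num.Theory.
Import numFieldNormedType.Exports.
Local Open Scope ring_scope.

Section S.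
Variable R : realType.

Lemma is_derive_mx_entry m n (f : R -> 'M[R]_(m,n)) (t : R) (D : 'M[R]_(m,n)) i j :
  is_derive t 1 f D -> is_derive t 1 (fun s => f s i j) (D i j).
Proof.
move=> [df <-].
have dij := (derivable_mxP f t 1).1 df i j.
apply: DeriveDef => //.
by rewrite derive_mx // mxE.
Qed.

Lemma is_derive_mx_entries m n (f : R -> 'M[R]_(m,n)) (t : R) (D : 'M[R]_(m,n)) :
  (forall i j, is_derive t 1 (fun s => f s i j) (D i j)) -> is_derive t 1 f D.
Proof.
move=> H.
have df : derivable f t 1.
  by apply/derivable_mxP => i j; case: (H i j).
apply: DeriveDef => //.
rewrite derive_mx //; apply/matrixP => i j; rewrite mxE.
by rewrite derive_val.
Qed.

Lemma is_derive_mulmx m n p (f : R -> 'M[R]_(m,n)) (g : R -> 'M[R]_(n,p)) (t : R) df dg :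
  is_derive t 1 f df -> is_derive t 1 g dg ->
  is_derive t 1 (fun s => f s *m g s) (df *m g t + f t *m dg).
Proof.
move=> Hf Hg; apply: is_derive_mx_entries => i j.
have -> : (fun s => (f s *m g s) i j) = \sum_(k < n) (fun s => f s i k * g s k j).
  by apply/funext => s; rewrite mxE fct_sumE.
rewrite !mxE -big_split /=.
apply: is_derive_sum => k.
have Hfk := @is_derive_mx_entry _ _ _ _ _ i k Hf.
have Hgk := @is_derive_mx_entry _ _ _ _ _ k j Hg.
have := @is_deriveM R R (fun s => f s i k) (fun s => g s k j) t 1 _ _ Hfk Hgk.
move=> H; apply: is_derive_eq.
by rewrite addrC; congr (_ + _); rewrite [LHS]mulrC.
Qed.

Lemma zero_deriv m n (h : R -> 'M[R]_(m,n)) (t : R) (D : 'M[R]_(m,n)) (a b : R) :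
  t \in `]a, b[ -> (forall s, s \in `]a, b[ -> h s = 0) -> is_derive t 1 h D -> D = 0.
Proof.
move=> tab H0 Hd.
have H1 : \forall s \near t, h s = cst 0 s.
  near=> s; apply: H0; near: s; exact: near_in_itvoo.
have := near_eq_is_derive H1 Hd.
by move=> H2; rewrite -(@derive_val _ _ _ _ _ _ _ H2) derive_cst.
Unshelve. all: by end_near. Qed.
End S.

Section A.
Variables (R : realType) (n k : nat).

Lemma spec_comm (A : 'M[R]_n) (lam : 'I_k -> R) (E : 'I_k -> 'M[R]_n) g :
  spectral_decomposition A lam E ->
  A *m E g = lam g *: E g /\ E g *m A = lam g *: E g.
Proof.
move=> [_ Hp Ho _ ->]; have EE : E g *m E g = E g by case: (Hp g) => [[_ ->]].
split.
- rewrite mulmx_suml (bigD1 g) //= big1 ?addr0; first by rewrite -scalemxAl EE.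
  by move=> f fg; rewrite -scalemxAl Ho ?scaler0.
- rewrite mulmx_sumr (bigD1 g) //= big1 ?addr0; first by rewrite -scalemxAr EE.
  by move=> f fg; rewrite -scalemxAr Ho ?scaler0 // eq_sym.
Qed.

Lemma blk_ee (P dP : 'M[R]_n) : P *m P = P -> dP *m P + P *m dP - dP = 0 ->
  P *m dP *m P = 0.
Proof.
move=> PP /eqP; rewrite subr_eq0 => /eqP H.
have : P *m dP *m P = P *m (dP *m P + P *m dP) *m P by rewrite H.
rewrite mulmxDr mulmxDl !mulmxA PP -!mulmxA PP !mulmxA.
by move/(congr1 (fun Z => Z - P *m dP *m P)); rewrite subrr addrK => <-.
Qed.

Lemma blk_ff (P Q S dP : 'M[R]_n) : Q *m P = 0 -> P *m S = 0 ->
  dP *m P + P *m dP - dP = 0 -> Q *m dP *m S = 0.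
Proof.
move=> QP PS /eqP; rewrite subr_eq0 => /eqP <-.
by rewrite mulmxDr mulmxDl !mulmxA QP mul0mx mul0mx -!mulmxA PS !mulmx0 addr0.
Qed.


Lemma blk_mix (P S dP Mt Ph : 'M[R]_n) (le lg : R) :
  lg != le -> P *m S = 0 -> P *m P = P -> Mt *m S = lg *: S -> P *m Mt = le *: P ->
  (- (Mt *m Ph + Ph *m Mt)) *m P + Mt *m dP - (dP *m Mt + P *m (- (Mt *m Ph + Ph *m Mt))) = 0 ->
  P *m dP *m S = ((le + lg) / (lg - le)) *: (P *m Ph *m S).
Proof.
move=> ne PS PP MS PM H.
have h1 := congr1 (fun Z => P *m Z *m S) H; move: h1 => /=.
rewrite mulmx0 mul0mx mulmxBr mulmxDr mulmxBl mulmxDl mulmxDr mulmxDl.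
have -> : P *m (- (Mt *m Ph + Ph *m Mt) *m P) *m S = 0.
  by rewrite -!mulmxA PS !mulmx0.
have -> : P *m (Mt *m dP) *m S = le *: (P *m dP *m S).
  by rewrite mulmxA PM -!scalemxAl.
have -> : P *m (dP *m Mt) *m S = lg *: (P *m dP *m S).
  by rewrite mulmxA -mulmxA MS scalemxAr.
have -> : P *m (P *m - (Mt *m Ph + Ph *m Mt)) *m S = - (le + lg) *: (P *m Ph *m S).
  rewrite mulmxA PP mulmxN mulNmx mulmxDr mulmxDl scaleNr; congr (- _).
  rewrite !mulmxA PM -!mulmxA MS -!scalemxAl !scalemxAr scalerDl.
  by rewrite -!mulmxDr.
rewrite add0r => h.
have ne' : le - lg != 0 by rewrite subr_eq0 eq_sym.
apply: (@scalerI _ _ (le - lg)) => //.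
rewrite scalerA scalerBl.
have -> : (le - lg) * ((le + lg) / (lg - le)) = - (le + lg).
  rewrite -opprB mulNr mulrCA mulfV ?mulr1 // subr_eq0 //.
move/eqP: h; rewrite subr_eq0 => /eqP ->.
by rewrite addrC addKr.
Qed.

Lemma blk_mix2 (P Q dP Mt Ph : 'M[R]_n) (le lf : R) :
  lf != le -> Q *m P = 0 -> P *m P = P -> Q *m Mt = lf *: Q -> Mt *m P = le *: P ->
  (- (Mt *m Ph + Ph *m Mt)) *m P + Mt *m dP - (dP *m Mt + P *m (- (Mt *m Ph + Ph *m Mt))) = 0 ->
  Q *m dP *m P = ((le + lf) / (lf - le)) *: (Q *m Ph *m P).
Proof.
move=> ne QP PP QM MP H.
have h1 := congr1 (fun Z => Q *m Z *m P) H; move: h1 => /=.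
rewrite mulmx0 mul0mx mulmxBr mulmxDr mulmxBl mulmxDl mulmxDr mulmxDl.
have -> : Q *m (P *m - (Mt *m Ph + Ph *m Mt)) *m P = 0.
  by rewrite mulmxA QP !mul0mx.
have -> : Q *m (Mt *m dP) *m P = lf *: (Q *m dP *m P).
  by rewrite mulmxA QM -!scalemxAl.
have -> : Q *m (dP *m Mt) *m P = le *: (Q *m dP *m P).
  by rewrite mulmxA -mulmxA MP scalemxAr.
have -> : Q *m (- (Mt *m Ph + Ph *m Mt) *m P) *m P = - (lf + le) *: (Q *m Ph *m P).
  rewrite -!mulmxA PP mulNmx mulmxN scaleNr; congr (- _).
  rewrite mulmxDl mulmxDr scalerDl; congr (_ + _).
    by rewrite !mulmxA QM -!scalemxAl.
  by rewrite -!mulmxA MP !scalemxAr !mulmxA.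
rewrite addr0 => /eqP; rewrite subr_eq0 => /eqP h.
have ne' : lf - le != 0 by rewrite subr_eq0.
apply: (@scalerI _ _ (lf - le)) => //.
rewrite scalerA mulrCA mulfV ?mulr1 // scalerBl -h.
by rewrite opprD addrCA subrr addr0 scaleNr opprK addrC.
Qed.
End A.

Arguments is_derive_mulmx {R m n p f g t df dg}.
Arguments spec_comm {R n k A lam E} g.
Arguments blk_ee {R n P dP}.
Arguments blk_ff {R n P Q S dP}.
Arguments blk_mix {R n P S dP Mt Ph le lg}.
Arguments blk_mix2 {R n P Q dP Mt Ph le lf}.

Theorem corollary7 (R : realType) (n k : nat) (a b : R)
    (M Phi : R -> 'M[R]_n) (lam : R -> 'I_k -> R) (E : R -> 'I_k -> 'M[R]_n)
    (dE : R -> 'I_k -> 'M[R]_n) :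
  (forall t, t \in `]a, b[ -> (M t)^T = M t) ->
  (forall t, t \in `]a, b[ -> (Phi t)^T = Phi t) ->
  (forall t, t \in `]a, b[ ->
     is_derive t 1 M (- (M t *m Phi t + Phi t *m M t))) ->
  (forall t, t \in `]a, b[ -> spectral_decomposition (M t) (lam t) (E t)) ->
  (forall t e, t \in `]a, b[ -> is_derive t 1 (fun s => E s e) (dE t e)) ->
  forall t, t \in `]a, b[ -> forall e : 'I_k,
    dE t e = \sum_(f < k | f != e)
      ((lam t e + lam t f) / (lam t f - lam t e)) *:
        (E t e *m Phi t *m E t f + E t f *m Phi t *m E t e).
Proof.
move=> _ _ HdM Hsp HdE t tab e.
have hA : dE t e *m E t e + E t e *m dE t e - dE t e = 0.
  apply: (@zero_deriv _ _ _ (fun s => E s e *m E s e - E s e) t _ a b tab).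
    move=> s sab; have [_ Hp _ _ _] := Hsp s sab.
    by case: (Hp e) => [[_ ->]] _; rewrite subrr.
  exact: (is_deriveB (is_derive_mulmx (HdE t e tab) (HdE t e tab)) (HdE t e tab)).
have hB : (- (M t *m Phi t + Phi t *m M t)) *m E t e + M t *m dE t e
     - (dE t e *m M t + E t e *m (- (M t *m Phi t + Phi t *m M t))) = 0.
  apply: (@zero_deriv _ _ _ (fun s => M s *m E s e - E s e *m M s) t _ a b tab).
    move=> s sab; have [-> ->] := spec_comm e (Hsp s sab).
    by rewrite subrr.
  exact: (is_deriveB (is_derive_mulmx (HdM t tab) (HdE t e tab))
                     (is_derive_mulmx (HdE t e tab) (HdM t tab))).
have [Hneq Hproj Horth Hsum HM] := Hsp t tab.
have EE f : E t f *m E t f = E t f by case: (Hproj f) => [[_ ->]].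
set P := E t e in hA hB *; set dP := dE t e in hA hB *.
have -> : dP = \sum_f \sum_g (E t f *m dP *m E t g).
  have hd : dP = (\sum_f E t f) *m dP *m (\sum_g E t g) by rewrite Hsum mul1mx mulmx1.
  rewrite {1}hd mulmx_suml mulmx_suml; apply: eq_bigr => f _.
  by rewrite mulmx_sumr.
rewrite (bigD1 e) //= (bigD1 e (P := predT)) //= blk_ee // add0r.
under [RHS]eq_bigr do rewrite scalerDr.
rewrite big_split /=; congr (_ + _).
  apply: eq_bigr => g ge.
  apply: (blk_mix _ _ _ _ _ hB); first by rewrite Hneq.
  - by rewrite Horth // eq_sym.
  - exact: EE.
  - by have [-> _] := spec_comm g (Hsp t tab).
  - by have [_ ->] := spec_comm e (Hsp t tab).
apply: eq_bigr => f fe.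
rewrite (bigD1 e) //= big1 ?addr0.
  apply: (blk_mix2 _ _ _ _ _ hB); first by rewrite Hneq.
  - by rewrite Horth.
  - exact: EE.
  - by have [_ ->] := spec_comm f (Hsp t tab).
  - by have [-> _] := spec_comm e (Hsp t tab).
move=> g ge; apply: blk_ff hA; by rewrite Horth // eq_sym.
Qed.
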